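(* Let $D$ be a period domain, $F\in D$ a reference point, and $V\subset G_{\mathbb R}$ the (compact) stabilizer of $F$. Then every element of $\Lambda^k\big((\mathfrak g^{-1,1})^\vee\oplus(\mathfrak g^{1,-1})^\vee\big)$ that is invariant under the action induced by $\mathrm{Ad}(V)$ lies in $\bigoplus_{p}\Lambda^p(\mathfrak g^{-1,1})^\vee\otimes\Lambda^p(\mathfrak g^{1,-1})^\vee$, i.e. is of type $(p,p)$. Equivalently: the $G_{\mathbb R}$-invariant forms on $D$ that are orthogonal to the algebraic ideal generated by $I$ and $\bar I$ are all of type $(p,p)$.
   Context: $H$ is a finite-dimensional $\mathbb Q$-vector space with non-degenerate bilinear form $Q$, $Q(u,v)=(-1)^nQ(v,u)$; $D$ is the period domain of polarized Hodge structures $H_{\mathbb C}=\bigoplus_{p+q=n}H^{p,q}$ (with $\overline{H^{p,q}}=H^{q,p}$, $Q(F^p,F^{n-p+1})=0$, $Q(Cu,\bar u)>0$ for $u\neq 0$, $C=i^{p-q}$ on $H^{p,q}$, $F^p=\bigoplus_{p'\ge p}H^{p',n-p'}$) with fixed Hodge numbers; $G_{\mathbb R}=\mathrm{Aut}(H_{\mathbb R},Q)$ acts transitively on $D$, $D=G_{\mathbb R}/V$. At $F$, the complexified Lie algebra decomposes as $\mathfrak g_{\mathbb C}=\bigoplus_r\mathfrak g^{r,-r}$, $\mathfrak g^{r,-r}=\{X: X(H^{p,q})\subset H^{p+r,q-r}\}$, with $\mathfrak v_{\mathbb C}=\mathfrak g^{0,0}$; $\mathrm{Ad}(V)$ preserves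 each $\mathfrak g^{r,-r}$. $T^{1,0}_FD\cong\bigoplus_{r>0}\mathfrak g^{-r,r}$, $T^{0,1}_FD\cong\bigoplus_{r>0}\mathfrak g^{r,-r}$. The infinitesimal period relation $I\subset T^{*1,0}D$ is the annihilator of $\mathfrak g^{-1,1}$, and $\bar I$ its conjugate; forms at $F$ orthogonal (for the Hodge metrics) to the algebraic ideal generated by $I,\bar I$ are identified with $\Lambda^*\big((\mathfrak g^{-1,1})^\vee\oplus(\mathfrak g^{1,-1})^\vee\big)$, and $G_{\mathbb R}$-invariant forms correspond to $\mathrm{Ad}(V)$-invariant elements at $F$. Type $(p,q)$ refers to the summand $\Lambda^p(\mathfrak g^{-1,1})^\vee\otimes\Lambda^q(\mathfrak g^{1,-1})^\vee$. *)

(* Defs.v *)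
From HB Require Import structures.
From mathcomp Require Import all_boot all_order all_algebra.
From mathcomp Require Import reals complex.
Set Implicit Arguments. Unset Strict Implicit. Unset Printing Implicit Defensive.
Import Order.TTheory GRing.Theory Num.Theory.
Local Open Scope ring_scope.

(* Conventions: H = Q^m with row vectors; subspaces of H_C = C^m are the row
   spaces of square matrices 'M[C]_m (mxalgebra, %MS); C = R[i] with R real.  An endomorphism X acts by u |-> u *m X. *)

Section HodgeData.
Variable R : realType.
Local Notation C := (R[i]).

Definition ratC (x : rat) : C := ratr x.
Definition QC m (Q : 'M[rat]_m) : 'M[C]_m := map_mx ratC Q.
Definition realC m (g : 'M[R]_m) : 'M[C]_m := map_mx (fun x => x%:C%C) g.
Definition conjmx m n (A : 'M[C]_(m, n)) : 'M[C]_(m, n) := map_mx (@conjc R) A.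

Definition Qform m (Q : 'M[rat]_m) (u v : 'rV[C]_m) : C :=
  (u *m QC Q *m v^T) 0 0.

(* H^{p, n-p}, indexed by p; we put H^{p,n-p} = 0 for p outside [0, n] *)
Definition hpart m n (h : nat -> 'M[C]_m) (p : int) : 'M[C]_m :=
  if (0 <= p) && (p <= n%:Z) then h `|p|%N else 0.

Definition filt m n (h : nat -> 'M[C]_m) (p : nat) : 'M[C]_m :=
  (\sum_(p <= p' < n.+1) h p')%MS.

Definition polarized_hodge m n (Q : 'M[rat]_m) (h : nat -> 'M[C]_m) : Prop :=
  [/\ Q^T = (-1) ^+ n *: Q /\ Q \in unitmx,
      (\sum_(p < n.+1) h p :=: 1%:M)%MS /\ mxdirect (\sum_(p < n.+1) h p),
      (forall p, (p <= n)%N -> (conjmx (h p) :=: h (n - p)%N)%MS),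
      (forall p, (p <= n.+1)%N ->
          filt n h p *m QC Q *m (filt n h (n.+1 - p)%N)^T = 0) &
      (forall p (u : 'rV[C]_m), (p <= n)%N -> (u <= h p)%MS -> u != 0 ->
          0 < 'i%C ^ (p%:Z - (n - p)%N%:Z) * Qform Q u (conjmx u))].

Definition in_V m n (Q : 'M[rat]_m) (h : nat -> 'M[C]_m) (g : 'M[R]_m) : Prop :=
  [/\ g \in unitmx,
      g *m map_mx (fun x : rat => (ratr x : R)) Q *m g^T
        = map_mx (fun x : rat => (ratr x : R)) Q &
      forall p, (filt n h p *m realC g <= filt n h p)%MS].

Definition in_gC m (Q : 'M[rat]_m) (X : 'M[C]_m) : Prop :=
  X *m QC Q + QC Q *m X^T = 0.

Definition in_grr m n (Q : 'M[rat]_m) (h : nat -> 'M[C]_m) (r : int)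
    (X : 'M[C]_m) : Prop :=
  in_gC Q X /\ forall p : 'I_n.+1, (h p *m X <= hpart n h (p%:Z + r))%MS.

Definition in_W m n Q (h : nat -> 'M[C]_m) (w : 'M[C]_m * 'M[C]_m) : Prop :=
  in_grr n Q h (-1) w.1 /\ in_grr n Q h 1 w.2.

Definition upd (T : Type) k (w : 'I_k -> T) (i : 'I_k) (x : T) : 'I_k -> T :=
  fun j => if j == i then x else w j.

Definition pair_comb m (a : C) (x y : 'M[C]_m * 'M[C]_m) :=
  (a *: x.1 + y.1, a *: x.2 + y.2).

(* Lambda^k(W^vee), as alternating C-multilinear k-forms on W *)
Definition alt_form m n Q (h : nat -> 'M[C]_m) k
    (om : ('I_k -> 'M[C]_m * 'M[C]_m) -> C) : Prop :=
  (forall w i a x y, (forall j, in_W n Q h (w j)) -> in_W n Q h x ->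
      in_W n Q h y ->
      om (upd w i (pair_comb a x y)) = a * om (upd w i x) + om (upd w i y))
  /\ (forall w (i j : 'I_k), (forall l, in_W n Q h (w l)) -> i != j ->
      w i = w j -> om w = 0).

(* Ad(g) X = g X g^{-1} as endomorphisms; in the row convention: g^-1 X g *)
Definition Ad m (g : 'M[R]_m) (X : 'M[C]_m) : 'M[C]_m :=
  invmx (realC g) *m X *m realC g.

Definition Ad_pair m (g : 'M[R]_m) (x : 'M[C]_m * 'M[C]_m) :=
  (Ad g x.1, Ad g x.2).

(* the component of om in Lambda^p(g^{-1,1})^vee (x) Lambda^{k-p}(g^{1,-1})^vee *)
Definition form_comp m k (om : ('I_k -> 'M[C]_m * 'M[C]_m) -> C) (p : nat)
    (w : 'I_k -> 'M[C]_m * 'M[C]_m) : C :=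
  \sum_(S : {set 'I_k} | #|S| == p)
     om (fun i => if i \in S then ((w i).1, 0) else (0, (w i).2)).

End HodgeData.

(* Main.v *)
Require Import Defs.
From HB Require Import structures.
From mathcomp Require Import all_boot all_order all_algebra.
From mathcomp Require Import reals complex.
From Stdlib Require Import FunctionalExtensionality.
From mathcomp Require Import ring lra.
From mathcomp Require Import zify.
Import Order.TTheory GRing.Theory Num.Theory.
Local Open Scope ring_scope.
Set Implicit Arguments. Unset Strict Implicit.

Section Forms.
Variables (R : realType) (m k : nat).
Local Notation C := (R[i]).
Local Notation PT := ('M[C]_m * 'M[C]_m)%type.
Variable P : PT -> Prop.
Hypothesis PL : forall x, P x -> P (x.1, 0).
Hypothesis PR : forall x, P x -> P (0, x.2).
Hypothesis PZ : forall c x, P x -> P (c *: x.1, c *: x.2).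
Variable om : ('I_k -> PT) -> C.
Hypothesis Hlin : forall w i a x y, (forall j, P (w j)) -> P x -> P y ->
      om (upd w i (pair_comb a x y)) = a * om (upd w i x) + om (upd w i y).

Lemma P0 x : P x -> P (0, 0).
Proof. by move=> Px; have := PL (PR Px). Qed.

Lemma om_upd0 w i : (forall j, P (w j)) -> om (upd w i (0, 0)) = 0.
Proof.
move=> Pw; have P00 := P0 (Pw i).
have := Hlin i 1 Pw P00 P00; rewrite /pair_comb /= scaler0 addr0 mul1r.
by move=> H; apply: (addrI (om (upd w i (0,0)))); rewrite addr0 -H.
Qed.

Lemma om_add w i x y : (forall j, P (w j)) -> P x -> P y ->
  om (upd w i (x.1 + y.1, x.2 + y.2)) = om (upd w i x) + om (upd w i y).
Proof. by move=> Pw Px Py; have := Hlin i 1 Pw Px Py; rewrite /pair_comb !scale1r mul1r. Qed.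

Lemma om_scale w i c x : (forall j, P (w j)) -> P x ->
  om (upd w i (c *: x.1, c *: x.2)) = c * om (upd w i x).
Proof.
move=> Pw Px; have := Hlin i c Pw Px (P0 Px).
by rewrite /pair_comb /= !addr0 om_upd0 // addr0.
Qed.

Lemma upd_id (w : 'I_k -> PT) i : upd w i (w i) = w.
Proof. by apply: functional_extensionality => j; rewrite /upd; case: eqP => // ->. Qed.

Definition mix (A S : {set 'I_k}) (w : 'I_k -> PT) : 'I_k -> PT :=
  fun i => if i \in A then (if i \in S then ((w i).1, 0) else (0, (w i).2)) else w i.

Lemma powerset_split
   (A : {set 'I_k}) x (F : {set 'I_k} -> C) : x \in A ->
  \sum_(S : {set 'I_k} | S \subset A) F S =
  (\sum_(S : {set 'I_k} | S \subset A :\ x) F (x |: S)) +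
     (\sum_(S : {set 'I_k} | S \subset A :\ x) F S).
Proof.
move=> xA; rewrite (bigID (fun S : {set 'I_k} => x \in S)) /=; congr (_ + _); last first.
  by apply: eq_bigl => S; rewrite subsetD1.
rewrite (reindex_onto (fun S => x |: S) (fun T => T :\ x)) /=; last first.
  by move=> T /andP[_ xT]; rewrite setD1K.
apply: eq_bigl => S; apply/idP/idP.
  move=> /andP[/andP[sA _] /eqP eS]; have xS : x \notin S.
    by rewrite -eS !inE eqxx.
  rewrite subsetD1 xS andbT; apply: subset_trans sA; exact: subsetUr.
rewrite subsetD1 => /andP[sA xS].
rewrite setU1K // eqxx andbT setU11 andbT.
by apply/subsetP => y; rewrite !inE => /orP[/eqP-> //|/(subsetP sA)].
Qed.

Lemma expand (A : {set 'I_k}) w : (forall j, P (w j)) ->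
  om w = \sum_(S : {set 'I_k} | S \subset A) om (mix A S w).
Proof.
have [N] := ubnP #|A|; elim: N A w => // N IH A w.
case: (set_0Vmem A) => [-> _ Pw|[x xA] cA Pw].
  rewrite (big_pred1 set0); last by move=> S; rewrite subset0.
  congr om; apply: functional_extensionality => i; by rewrite /mix inE.
have cA' : (#|A :\ x| < N)%N by rewrite (cardsD1 x A) xA in cA.
rewrite (powerset_split _ xA).
set wL := upd w x ((w x).1, 0); set wR := upd w x (0, (w x).2).
have PwL : forall j, P (wL j) by move=> j; rewrite /wL /upd; case: eqP => // _; exact: PL.
have PwR : forall j, P (wR j) by move=> j; rewrite /wR /upd; case: eqP => // _; exact: PR.
have -> : om w = om wL + om wR.
  have PLx := PL (Pw x); have PRx := PR (Pw x).
  rewrite -{1}(upd_id w x) /wL /wR -om_add //=.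
  by rewrite addr0 add0r -surjective_pairing.
rewrite (IH _ wL cA' PwL) (IH _ wR cA' PwR); congr (_ + _); apply: eq_bigr => S sS;
  congr om; apply: functional_extensionality => i; rewrite /mix /wL /wR /upd.
  have [->|ix] := eqVneq i x; first by rewrite setD11 xA setU11.
  by rewrite !inE (negPf ix).
have xS : x \notin S by move: sS; rewrite subsetD1 => /andP[].
have [->|ix] := eqVneq i x; first by rewrite setD11 xA (negPf xS).
by rewrite !inE (negPf ix).
Qed.

Lemma scale_all (A : {set 'I_k}) (c : 'I_k -> C) w : (forall j, P (w j)) ->
  om (fun i => if i \in A then (c i *: (w i).1, c i *: (w i).2) else w i)
  = (\prod_(i in A) c i) * om w.
Proof.
have [N] := ubnP #|A|; elim: N A w => // N IH A w.
case: (set_0Vmem A) => [-> _ Pw|[x xA] cA Pw].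
  rewrite big_set0 mul1r; congr om; apply: functional_extensionality => i; by rewrite inE.
have cA' : (#|A :\ x| < N)%N by rewrite (cardsD1 x A) xA in cA.
set w' := fun i => if i \in A :\ x then (c i *: (w i).1, c i *: (w i).2) else w i.
have Pw' : forall j, P (w' j) by move=> j; rewrite /w'; case: ifP => // _; exact: PZ.
have -> : (fun i => if i \in A then (c i *: (w i).1, c i *: (w i).2) else w i)
   = upd w' x (c x *: (w' x).1, c x *: (w' x).2).
  apply: functional_extensionality => i; rewrite /upd /w'.
  have [->|ix] := eqVneq i x; first by rewrite setD11 xA.
  by rewrite !inE (negPf ix).
by rewrite om_scale // upd_id IH // (big_setD1 x xA) /= mulrA.
Qed.


Variable lam : C.
Hypothesis Hinv : forall w, (forall j, P (w j)) ->
  om (fun i => (lam^-1 *: (w i).1, lam *: (w i).2)) = om w.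
Hypothesis Hlam : forall a b : nat, a != b -> lam^-1 ^+ a * lam ^+ b != 1.

Lemma prod_if (S : {set 'I_k}) (u v : C) :
  \prod_(i in [set: 'I_k]) (if i \in S then u else v) = u ^+ #|S| * v ^+ (k - #|S|).
Proof.
rewrite (bigID (fun i => i \in S)) /=.
rewrite (eq_bigl (fun i => i \in S)); last by move=> i; rewrite inE.
rewrite (eq_bigr (fun _ => u)); last by move=> i ->.
rewrite prodr_const; congr (_ * _).
rewrite (eq_bigr (fun _ => v)); last by move=> i /andP[_ /negPf ->].
rewrite prodr_const; congr (_ ^+ _).
rewrite (@eq_card _ _ (~: S)); last by move=> i; rewrite [in RHS]inE -topredE /= inE.
move: (cardsC S); rewrite card_ord; set c := #|~: S|; set s := #|S|; move=> e; rewrite -e; by rewrite addKn.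
Qed.

Lemma vanish w (S : {set 'I_k}) : (forall j, P (w j)) -> (#|S| + #|S| != k)%N ->
  om (mix [set: 'I_k] S w) = 0.
Proof.
move=> Pw hS; set v := mix [set: 'I_k] S w.
have Pv : forall j, P (v j).
  by move=> j; rewrite /v /mix inE; case: ifP => _; [exact: PL | exact: PR].
have := Hinv Pv.
have -> : (fun i => (lam^-1 *: (v i).1, lam *: (v i).2)) =
  (fun i => if i \in [set: 'I_k] then
     ((if i \in S then lam^-1 else lam) *: (v i).1,
      (if i \in S then lam^-1 else lam) *: (v i).2) else v i).
  apply: functional_extensionality => i; rewrite inE /v /mix inE.
  by case: ifP => _ /=; rewrite !scaler0.
rewrite scale_all // prod_if => /eqP; rewrite -subr_eq0 -{2}[om v]mul1r -mulrBl.
rewrite mulf_eq0 subr_eq0 (negPf (Hlam _)) /= => [/eqP //|].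
have Sk : (#|S| <= k)%N by have := max_card (mem S); rewrite card_ord.
by apply: contra hS => /eqP {2}->; rewrite subnKC.
Qed.

Lemma regroup w : (forall j, P (w j)) ->
  om w = \sum_(p < k.+1 | (p + p == k)%N) form_comp om p w.
Proof.
move=> Pw; rewrite (expand [set: 'I_k] Pw).
rewrite (eq_bigl predT); last by move=> S; rewrite subsetT.
have fcE : forall p : 'I_k.+1, form_comp om p w =
    \sum_(S : {set 'I_k}) (if #|S| == p then om (mix [set: 'I_k] S w) else 0).
  move=> p; rewrite /form_comp big_mkcond; apply: eq_bigr => S _.
  case: ifP => // _; congr om; apply: functional_extensionality => i.
  by rewrite /mix inE.
rewrite (eq_bigr _ (fun p _ => fcE p)) exchange_big /=; apply: eq_bigr => S _.
have [hS|hS] := eqVneq (#|S| + #|S|)%N k; last first.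
  rewrite vanish // big1 // => p _; by case: ifP.
have Sk : (#|S| < k.+1)%N by have := max_card (mem S); rewrite card_ord.
rewrite (bigD1 (Ordinal Sk)) /= ?hS // eqxx big1 ?addr0 // => p /andP[_ pS].
case: eqP => // eSp; case/eqP: pS; apply: val_inj => /=; by rewrite eSp.
Qed.

End Forms.

Section Hodge.
Variables (R : realType) (m n : nat) (Q : 'M[rat]_m) (h : nat -> 'M[R[i]]_m).
Local Notation C := (R[i]).
Local Notation conjmx := Defs.conjmx.
Hypothesis hsum : (\sum_(p < n.+1) h p :=: 1%:M)%MS.
Hypothesis hdir : mxdirect (\sum_(p < n.+1) h p).
Hypothesis hconj : forall p, (p <= n)%N -> (conjmx (h p) :=: h (n - p)%N)%MS.
Hypothesis hfilt : forall p, (p <= n.+1)%N ->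
          filt n h p *m QC R Q *m (filt n h (n.+1 - p)%N)^T = 0.

Definition rest (p : 'I_n.+1) := (\sum_(j < n.+1 | j != p) h j)%MS.
Definition Pr (p : 'I_n.+1) := proj_mx (h p) (rest p).

Lemma disj (p : 'I_n.+1) : (h p :&: rest p = 0)%MS.
Proof. by move/mxdirect_sumsP: hdir => H; exact: H p isT. Qed.

Lemma Pr_id l (A : 'M_(l, m)) (p : 'I_n.+1) : (A <= h p)%MS -> A *m Pr p = A.
Proof. by move=> sA; rewrite proj_mx_id ?disj. Qed.

Lemma Pr_0 l (A : 'M_(l, m)) (p q : 'I_n.+1) : (A <= h q)%MS -> q != p -> A *m Pr p = 0.
Proof. by move=> sA qp; rewrite proj_mx_0 ?disj // (sumsmx_sup q). Qed.

Definition Gm (mu : nat -> C) := \sum_(p < n.+1) mu p *: Pr p.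

Lemma Gm_act mu l (A : 'M_(l, m)) (p : 'I_n.+1) : (A <= h p)%MS -> A *m Gm mu = mu p *: A.
Proof.
move=> sA; rewrite /Gm mulmx_sumr (bigD1 p) //= -scalemxAr Pr_id //.
rewrite big1 ?addr0 // => q qp; by rewrite -scalemxAr (Pr_0 sA) ?scaler0 // eq_sym.
Qed.

Lemma Gm_actn mu l (A : 'M_(l, m)) p : (p <= n)%N -> (A <= h p)%MS -> A *m Gm mu = mu p *: A.
Proof. by move=> pn sA; have := @Gm_act mu l A (Ordinal (pn : (p < n.+1)%N)) sA. Qed.

Lemma agree l (A B : 'M[C]_(m, l)) : (forall p : 'I_n.+1, h p *m A = h p *m B) -> A = B.
Proof.
move=> hAB; have s1 : (1%:M <= \sum_(p < n.+1) h p)%MS by rewrite hsum submx_refl.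
have [u_ e1] := sub_sumsmxP s1.
rewrite -[A]mul1mx -[B]mul1mx e1 !mulmx_suml; apply: eq_bigr => p _.
by rewrite -!mulmxA hAB.
Qed.


Lemma conjmxK l l' (A : 'M[C]_(l, l')) : conjmx (conjmx A) = A.
Proof. by apply/matrixP => i j; rewrite /Defs.conjmx !mxE conjcK. Qed.

Lemma conjmxM l1 l2 l3 (A : 'M[C]_(l1, l3)) (B : 'M[C]_(l3, l2)) :
  conjmx (A *m B) = conjmx A *m conjmx B.
Proof. by rewrite /Defs.conjmx map_mxM. Qed.

Lemma conjmxZ l l' (a : C) (A : 'M[C]_(l, l')) : conjmx (a *: A) = a^*%C *: conjmx A.
Proof. by rewrite /Defs.conjmx map_mxZ. Qed.

Lemma conjmxT l l' (A : 'M[C]_(l, l')) : conjmx A^T = (conjmx A)^T.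
Proof. by rewrite /Defs.conjmx map_trmx. Qed.

Lemma conjQC : conjmx (QC R Q) = QC R Q.
Proof. by apply/matrixP => i j; rewrite /Defs.conjmx /QC /ratC !mxE fmorph_rat. Qed.

Lemma hsub_filt r p : (r <= p)%N -> (p <= n)%N -> (h p <= filt n h r)%MS.
Proof.
move=> rp pn; rewrite /filt big_geq_mkord.
by apply: (sumsmx_sup (Ordinal (pn : (p < n.+1)%N))) => //=.
Qed.

Lemma orth_gen l1 l2 (A : 'M[C]_(l1, m)) (B : 'M[C]_(l2, m)) p q :
  (p <= n)%N -> (q <= n)%N -> (n < p + q)%N -> (A <= h p)%MS -> (B <= h q)%MS ->
  A *m QC R Q *m B^T = 0.
Proof.
move=> pn qn npq sA sB.
have /submxP[a ->] : (A <= filt n h p)%MS by apply: submx_trans sA (hsub_filt _ pn).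
have /submxP[b ->] : (B <= filt n h (n.+1 - p))%MS.
  apply: submx_trans sB (hsub_filt _ qn); lia.
by rewrite trmx_mul !mulmxA -(mulmxA a) -(mulmxA a) hfilt ?mulmx0 ?mul0mx //; lia.
Qed.

Lemma orth l1 l2 (A : 'M[C]_(l1, m)) (B : 'M[C]_(l2, m)) p q :
  (p <= n)%N -> (q <= n)%N -> (p + q != n)%N -> (A <= h p)%MS -> (B <= h q)%MS ->
  A *m QC R Q *m B^T = 0.
Proof.
move=> pn qn npq sA sB; have [lt|ge] := ltnP n (p + q); first exact: orth_gen lt sA sB.
suff H : conjmx (A *m QC R Q *m B^T) = 0.
  by rewrite -[LHS]conjmxK H /Defs.conjmx map_mx0.
rewrite !conjmxM conjQC conjmxT.
apply: (@orth_gen _ _ _ _ (n - p) (n - q)); rewrite ?leq_subr //.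
- lia.
- by apply: submx_trans (_ : conjmx (h p) <= _)%MS; rewrite ?map_submx // hconj.
- by apply: submx_trans (_ : conjmx (h q) <= _)%MS; rewrite ?map_submx // hconj.
Qed.


Variable z : C.
Hypothesis Hz : z * z^*%C = 1.

Lemma z_neq0 : z != 0.
Proof. by apply/eqP => z0; move: Hz; rewrite z0 mul0r => /eqP; rewrite eq_sym oner_eq0. Qed.

Lemma conj_z : z^*%C = z^-1.
Proof. by rewrite -[LHS]mul1r -(mulVf z_neq0) -mulrA Hz mulr1. Qed.

Definition mu (p : nat) : C := z ^+ p / z ^+ (n - p).

Lemma mu_neq0 p : mu p != 0.
Proof. by rewrite /mu mulf_neq0 ?invr_eq0 ?expf_neq0 ?z_neq0. Qed.

Lemma conj_mu p : (p <= n)%N -> (mu p)^*%C = mu (n - p).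
Proof.
move=> pn; rewrite /mu subKn // rmorphM fmorphV !rmorphXn.
rewrite (_ : complex_conjc__canonical__GRing_RMorphism R z = z^-1); last exact: conj_z.
rewrite !exprVn.
by rewrite invrK mulrC.
Qed.

Definition G := Gm mu.

Lemma GA l (A : 'M_(l, m)) (p : 'I_n.+1) : (A <= h p)%MS -> A *m G = mu p *: A.
Proof. exact: Gm_act. Qed.

Lemma GAn l (A : 'M_(l, m)) p : (p <= n)%N -> (A <= h p)%MS -> A *m G = mu p *: A.
Proof. exact: Gm_actn. Qed.

Lemma realG : conjmx G = G.
Proof.
apply: agree => p; rewrite (GA (submx_refl (h p))).
have pn : (p <= n)%N by rewrite -ltnS.
have sc : (conjmx (h p) <= h (n - p))%MS by rewrite hconj.
rewrite -{1}[h p]conjmxK -conjmxM (GAn (leq_subr p n) sc) conjmxZ conjmxK.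
by rewrite conj_mu ?leq_subr // subKn.
Qed.

Definition g : 'M[R]_m := map_mx (fun x : C => complex.Re x) G.

Lemma realCg : realC g = G.
Proof.
apply/matrixP => i j; have := congr1 (fun M : 'M[C]_m => M i j) realG.
rewrite /realC /g /Defs.conjmx !mxE /=; case: (G i j) => a b /= [] e.
by congr Complex; lra.
Qed.

Lemma GG' : G *m Gm (fun p => (mu p)^-1) = 1%:M.
Proof.
apply: agree => p; rewrite mulmxA (GA (submx_refl (h p))) mulmx1.
rewrite -scalemxAl (Gm_act _ (submx_refl (h p))) scalerA mulfV ?scale1r //.
exact: mu_neq0.
Qed.

Lemma Gunit : G \in unitmx.
Proof. exact: (mulmx1_unit GG').1. Qed.

Lemma hpinv (p : 'I_n.+1) : h p *m invmx G = (mu p)^-1 *: h p.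
Proof.
rewrite -{2}[h p](mulmxK Gunit) (GA (submx_refl (h p))) -scalemxAl scalerA.
by rewrite mulVf ?scale1r // mu_neq0.
Qed.

Lemma GQG : G *m QC R Q *m G^T = QC R Q.
Proof.
apply: agree => p; apply: trmx_inj; apply: agree => q.
rewrite -[h q]trmxK -!trmx_mul; congr trmx.
have -> : h p *m (G *m QC R Q *m G^T) *m (h q)^T = (h p *m G) *m QC R Q *m (h q *m G)^T.
  by rewrite trmx_mul !mulmxA.
rewrite (GA (submx_refl (h p))) (GA (submx_refl (h q))) linearZ /= -scalemxAl -scalemxAr.
rewrite -scalemxAl scalerA.
have pn : (p <= n)%N by rewrite -ltnS.
have qn : (q <= n)%N by rewrite -ltnS.
have [e|ne] := eqVneq (p + q)%N n.
  have -> : mu q * mu p = 1.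
    have e1 : (n - p = q)%N by lia.
    have e2 : (n - q = p)%N by lia.
    rewrite /mu e1 e2 mulrA divfK ?mulfV // expf_neq0 // z_neq0 //.
  by rewrite scale1r.
by rewrite (orth pn qn ne (submx_refl _) (submx_refl _)) scaler0.
Qed.


Lemma gV : in_V n Q h g.
Proof.
have rc : map_mx (real_complex R) g = G by exact: realCg.
split.
- by rewrite -(map_unitmx (real_complex R)) rc Gunit.
- have rcT : map_mx (real_complex R) g^T = G^T.
    apply/matrixP => i j; have := congr1 (fun M : 'M[C]_m => M j i) rc.
    by rewrite !mxE.
  apply: (@map_mx_inj _ _ (real_complex R)); rewrite !map_mxM rcT rc.
  have rq : map_mx (real_complex R) (map_mx (fun x : rat => (ratr x : R)) Q) = QC R Q.
    by apply/matrixP => i j; rewrite !mxE /ratC fmorph_rat.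
  by rewrite rq GQG.
- move=> p; rewrite realCg /filt big_geq_mkord sumsmxMr.
  by apply: sumsmxS => i _; rewrite (GA (submx_refl _)) scalemx_sub.
Qed.

Lemma mu_ratio q : (q < n)%N -> (mu q.+1)^-1 * mu q = (z ^+ 2)^-1.
Proof.
move=> qn; rewrite /mu -(subnSK qn); set e := (n - q.+1)%N.
have z0 := z_neq0.
have a0 : z ^+ q != 0 := expf_neq0 _ z0.
have b0 : z ^+ e != 0 := expf_neq0 _ z0.
rewrite !exprS; field.
by rewrite z0 a0 b0.
Qed.

Lemma AdL X : in_grr n Q h (-1) X -> Ad g X = (z ^+ 2)^-1 *: X.
Proof.
move=> [_ hX]; rewrite /Ad realCg; apply: agree => p.
rewrite !mulmxA hpinv -!scalemxAl -scalemxAr.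
move: (hX p); rewrite /hpart.
case: p => [[|q] lt] /=.
  by rewrite submx0 => /eqP ->; rewrite mul0mx !scaler0.
have qn : (q <= n)%N := ltnW lt.
case: ifP => [_|/negP[]]; last by lia.
rewrite subn1 /= => sX; rewrite (GAn qn sX) scalerA mu_ratio //.
Qed.

Lemma AdR X : in_grr n Q h 1 X -> Ad g X = (z ^+ 2) *: X.
Proof.
move=> [_ hX]; rewrite /Ad realCg; apply: agree => p.
rewrite !mulmxA hpinv -!scalemxAl -scalemxAr.
move: (hX p); rewrite /hpart.
case: p => [q lt] /=.
have [qn|nq] := ltnP q n; last first.
  rewrite ifF; last by lia.
  by rewrite submx0 => /eqP ->; rewrite mul0mx !scaler0.
case: ifP => [_|/negP[]]; last by lia.
rewrite addn1 => sX; rewrite (GAn qn sX) scalerA.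
have r : (mu q)^-1 * mu q.+1 = z ^+ 2.
  by rewrite -[RHS]invrK -(mu_ratio qn) [in RHS]invfM [in RHS]invrK mulrC.
by rewrite r.
Qed.

End Hodge.

Section Root.
Variable R : realType.
Local Notation C := (R[i]).

Definition zeta : C := ((3%:R / 5%:R) +i* (4%:R / 5%:R))%C.

Lemma zetaJ : zeta * zeta^*%C = 1.
Proof.
apply/eqP; rewrite eq_complex /=.
have f5 : (5%:R : R) != 0 by rewrite pnatr_eq0.
by apply/andP; split; apply/eqP; field.
Qed.

Fixpoint ab (N : nat) : int * int :=
  if N is N'.+1 then let (a, b) := ab N' in (3 * a - 4 * b, 4 * a + 3 * b)%R
  else (1%R, 0%R).

Lemma zeta_pow N : zeta ^+ N =
  ((((ab N).1)%:~R / 5%:R ^+ N) +i* (((ab N).2)%:~R / 5%:R ^+ N))%C.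
Proof.
elim: N => [|N IH]; first by rewrite expr0 /= !expr0 !divr1.
rewrite exprS IH /=; case: (ab N) => a b /=.
apply/eqP; rewrite eq_complex /=.
have f5 : (5%:R : R) != 0 by rewrite pnatr_eq0.
rewrite !(rmorphB, rmorphD, rmorphM) /= !rmorph1 exprS.
have f5N : (5%:R : R) ^+ N != 0 := expf_neq0 _ f5.
by apply/andP; split; apply/eqP; field.
Qed.

Lemma ab_inv N : exists c : int, ((ab N).1 + 2 * (ab N).2 = 1 + 5 * c)%R.
Proof.
elim: N => [|N [c IH]]; first by exists 0%R.
move: IH => /=; case: (ab N) => a b /= IH.
exists (c + 2 * a)%R; lia.
Qed.

Lemma zeta_not_root N : (0 < N)%N -> zeta ^+ N != 1.
Proof.
case: N => // N _; apply/eqP; rewrite zeta_pow.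
have := ab_inv N.+1.
case: (ab N.+1) => a b /= [c Hc] /eqP; rewrite eq_complex /= => /andP[e1 e2].
have f5 : (5%:R : R) != 0 by rewrite pnatr_eq0.
have f5N : (5%:R : R) ^+ N.+1 != 0 := expf_neq0 _ f5.
have ea : a = (5 ^+ N.+1)%R.
  apply: (@intr_inj R); move: e1 => /eqP /divr1_eq ->.
  by rewrite rmorphXn.
have eb : b = 0.
  apply: (@intr_inj R); move: e2; rewrite mulf_eq0 invr_eq0 (negPf f5N) orbF => /eqP ->.
  by rewrite rmorph0.
move: Hc; rewrite ea eb exprS; set t := (5 ^+ N)%R; lia.
Qed.

End Root.

Section Closure.
Variables (R : realType) (m n : nat) (Q : 'M[rat]_m) (h : nat -> 'M[R[i]]_m).
Local Notation C := (R[i]).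

Lemma grr0 r : in_grr n Q h r 0.
Proof.
split; first by rewrite /in_gC mul0mx trmx0 mulmx0 addr0.
by move=> p; rewrite mulmx0 sub0mx.
Qed.

Lemma grrZ r c X : in_grr n Q h r X -> in_grr n Q h r (c *: X).
Proof.
move=> [gX hX]; split.
  rewrite /in_gC -scalemxAl (_ : (c *: X)^T = c *: X^T); last by apply/matrixP=> i j; rewrite !mxE.
  by rewrite -scalemxAr -scalerDr gX scaler0.
by move=> p; rewrite -scalemxAr; exact: scalemx_sub (hX p).
Qed.

Lemma WL x : in_W n Q h x -> in_W n Q h (x.1, 0).
Proof. by case=> a _; split => //; exact: grr0. Qed.
Lemma WR x : in_W n Q h x -> in_W n Q h (0, x.2).
Proof. by case=> _ b; split => //; exact: grr0. Qed.
Lemma WZ c x : in_W n Q h x -> in_W n Q h (c *: x.1, c *: x.2).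
Proof. by case=> a b; split; exact: grrZ. Qed.

End Closure.

Lemma pow_eq1 (F : fieldType) (x : F) a b : x != 0 -> x ^+ a = x ^+ b -> (a < b)%N ->
  x ^+ (b - a) = 1.
Proof.
move=> x0 e ab; apply: (mulfI (expf_neq0 a x0)).
by rewrite -exprD subnKC ?(ltnW ab) // -e mulr1.
Qed.

Lemma lam_ok (R : realType) (a b : nat) : a != b ->
  ((zeta R) ^+ 2)^-1 ^+ a * ((zeta R) ^+ 2) ^+ b != 1.
Proof.
move=> ab; apply/eqP => e.
have z0 : zeta R != 0.
  by apply/eqP => z0; have := zetaJ R; rewrite z0 mul0r => /eqP; rewrite eq_sym oner_eq0.
have l0 : (zeta R) ^+ 2 != 0 by rewrite expf_neq0.
have e' : ((zeta R) ^+ 2) ^+ b = ((zeta R) ^+ 2) ^+ a.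
  by apply: divr1_eq; rewrite mulrC -exprVn.
have [lt|lt|lt] := ltngtP a b.
- have := pow_eq1 l0 (esym e') lt; rewrite -exprM => /eqP.
  by rewrite (negPf (zeta_not_root _ _)) // muln_gt0 subn_gt0 lt.
- have := pow_eq1 l0 e' lt; rewrite -exprM => /eqP.
  by rewrite (negPf (zeta_not_root _ _)) // muln_gt0 subn_gt0 lt.
- by move: ab; rewrite lt eqxx.
Qed.


Theorem theorem4p10 (R : realType) (m n : nat) (Q : 'M[rat]_m)
    (h : nat -> 'M[R[i]]_m) (k : nat)
    (om : ('I_k -> 'M[R[i]]_m * 'M[R[i]]_m) -> R[i]) :
  polarized_hodge n Q h ->
  alt_form n Q h om ->
  (forall g : 'M[R]_m, in_V n Q h g ->
     forall w, (forall i, in_W n Q h (w i)) ->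
       om (fun i => Ad_pair g (w i)) = om w) ->
  forall w, (forall i, in_W n Q h (w i)) ->
    om w = \sum_(p < k.+1 | (p + p == k)%N) form_comp om p w.
Proof.
move=> [_ [hsum hdir] hconj hfilt _] [Hlin _] Hinv w Pw.
have Hz : zeta R * (zeta R)^*%C = 1 := zetaJ R.
apply: (regroup (@WL R m n Q h) (@WR R m n Q h) (@WZ R m n Q h) Hlin _ (@lam_ok R) Pw).
move=> w' Pw'.
rewrite -(Hinv (g n h (zeta R)) (gV hsum hdir hconj hfilt Hz) w' Pw').
congr om; apply: functional_extensionality => i.
by rewrite /Ad_pair (AdL hsum hdir hconj Hz (Pw' i).1) (AdR hsum hdir hconj Hz (Pw' i).2).
Qed.
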